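(* Let $s=(x_0,x_1,\dots,x_d,y)$ be a sample with features $x=(x_0,\dots,x_d)\in\mathbb{R}^{d+1}$ and label $y\in\{0,1\}$, and let $\lambda=(\lambda_1,\dots,\lambda_d)\in[0,1)^d$ with RIM augmentation $s_\lambda=(x_{0,\lambda_0},\dots,x_{d,\lambda_d},y)$. Let $f_\theta$ be a neural network with ReLU activations and sigmoid output, $f_\theta(x)=\sigma(g_\theta(x))$, where the last-layer pre-activation is $g_\theta(x)=\nabla g_\theta^T x+b$ with $\nabla g_\theta\in\mathbb{R}^{d+1}$ the gradient of $g_\theta$ with respect to the input. Let $l$ be the binary cross-entropy loss $l(s,\theta)=-\big(y\log f_\theta(x)+(1-y)\log(1-f_\theta(x))\big)$. Then $$\|l(s_\lambda,\theta)-l(s,\theta)\|\le\sqrt{d}\Big(\|A\|_F+\sum_{i=1}^d\|B_i\|_F\Big)\|\nabla g_\theta\|,$$ where $\|\cdot\|_F$ is the Frobenius norm, $\|\nabla g_\theta\|$ the Euclidean norm, and $A,B_1,\dots,B_d$ are the $(d+1)\times(d+1)$ matrices whose first row and first column are zero and whose lower-right $d\times d$ blocks have entry in row $j$, column $r$ ($1\le j,r\le d$) equal to $\frac{\partial x_{r,\lambda_r}}{\partial\lambda_j}\big|_{\lambda=\vec 0}$ for $A$ and $\frac{\partial^2 x_{r,\lambda_r}}{\partial\lambda_i\partial\lambda_j}\big|_{\lambda=\vec 0}$ for $B_i$ (these entries vanish for $r<j$).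
   Context: RIM augmentation: $x_{0,\lambda_0}=x_0$ and $x_{j,\lambda_j}=(1-\lambda_j)x_j+\lambda_j x_{j-1,\lambda_{j-1}}$ for $j=1,\dots,d$; the augmented sample keeps the label $y$. The matrix $A$ is interpreted as the ''velocity'' and the $B_i$ as the ''accelerations'' of the augmented features with respect to the interpolation coefficients. $\sigma(t)=1/(1+e^{-t})$. *)

(* Defs.v *)
From Stdlib Require Import Reals.
From Coquelicot Require Import Coquelicot.
Open Scope R_scope.

Fixpoint rsum1 (f : nat -> R) (n : nat) : R :=
  match n with
  | O => 0
  | S k => rsum1 f k + f (S k)
  end.

Definition rsum0 (f : nat -> R) (d : nat) : R := f O + rsum1 f d.

(* vectors of R^{d+1} are functions nat -> R, only indices 0..d matter *)
Definition dot (d : nat) (u v : nat -> R) : R := rsum0 (fun i => u i * v i) d.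
Definition euclid (d : nat) (u : nat -> R) : R := sqrt (rsum0 (fun i => (u i)^2) d).

(* (d+1)x(d+1) matrices as functions of (row, column) indices in 0..d *)
Definition frob (d : nat) (M : nat -> nat -> R) : R :=
  sqrt (rsum0 (fun j => rsum0 (fun r => (M j r)^2) d) d).

Definition sigma (t : R) : R := 1 / (1 + exp (- t)).
Definition bce (y t : R) : R :=
  - (y * ln (sigma t) + (1 - y) * ln (1 - sigma t)).

Definition loss (g : (nat -> R) -> R) (x : nat -> R) (y : R) : R := bce y (g x).

(* RIM augmentation: x_{0,lam_0} = x_0,
   x_{j,lam_j} = (1 - lam_j) x_j + lam_j x_{j-1,lam_{j-1}} *)
Fixpoint rim (x lam : nat -> R) (j : nat) : R :=
  match j with
  | O => x O
  | S k => (1 - lam (S k)) * x (S k) + lam (S k) * rim x lam k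
  end.

Definition upd (lam : nat -> R) (j : nat) (t : R) : nat -> R :=
  fun k => if Nat.eqb k j then t else lam k.

Definition zero_vec : nat -> R := fun _ => 0.

Definition dpartial (j : nat) (F : (nat -> R) -> R) (lam : nat -> R) : R :=
  Derive (fun t => F (upd lam j t)) (lam j).

Definition Amat (x : nat -> R) (j r : nat) : R :=
  match j, r with
  | O, _ | _, O => 0
  | _, _ => dpartial j (fun lam => rim x lam r) zero_vec
  end.

Definition Bmat (x : nat -> R) (i j r : nat) : R :=
  match j, r with
  | O, _ | _, O => 0
  | _, _ => dpartial i (dpartial j (fun lam => rim x lam r)) zero_vec
  end.

(* Main.v *)
Require Import Defs.
From Stdlib Require Import Reals Lra Lia.
From Coquelicot Require Import Coquelicot.
Open Scope R_scope.

Lemma rim_upd_lt x lam j t k : (k < j)%nat -> rim x (upd lam j t) k = rim x lam k.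
Proof.
  induction k as [|k IH]; intros H; simpl; auto.
  unfold upd at 1 2. replace (Nat.eqb (S k) j) with false by (symmetry; apply Nat.eqb_neq; lia).
  rewrite IH by lia. reflexivity.
Qed.

Lemma rim_upd_eq x lam k t : rim x (upd lam (S k) t) (S k) = (1 - t) * x (S k) + t * rim x lam k.
Proof.
  simpl. unfold upd at 1 2. rewrite Nat.eqb_refl. rewrite rim_upd_lt by lia. reflexivity.
Qed.

Lemma rim_zero x k : rim x zero_vec k = x k.
Proof. induction k; simpl; auto. rewrite IHk. unfold zero_vec. ring. Qed.

Lemma Derive_lin a c t0 : Derive (fun s => (1 - s) * a + s * c) t0 = c - a.
Proof. apply is_derive_unique. auto_derive; auto. ring. Qed.

Lemma Amat_dd x k : Amat x (S k) (S k) = x k - x (S k).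
Proof.
  unfold Amat, dpartial.
  rewrite (Derive_ext _ (fun s => (1 - s) * x (S k) + s * x k)).
  - apply Derive_lin.
  - intros t. rewrite rim_upd_eq, rim_zero. reflexivity.
Qed.

Lemma Bmat_ii x i : (1 <= i)%nat -> Bmat x i (S i) (S i) = x (pred i) - x i.
Proof.
  intros Hi. destruct i as [|k]; [lia|]. simpl pred.
  unfold Bmat, dpartial.
  rewrite (Derive_ext _ (fun t => (1 - t) * x (S k) + t * x k - x (S (S k)))).
  - apply is_derive_unique. auto_derive; auto. ring.
  - intros t.
    rewrite (Derive_ext _ (fun s => (1 - s) * x (S (S k)) + s * rim x (upd zero_vec (S k) t) (S k))).
    + rewrite Derive_lin. rewrite rim_upd_eq, rim_zero. ring.
    + intros s. apply rim_upd_eq.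
Qed.

Lemma rsum1_le f g n : (forall k, (1 <= k <= n)%nat -> f k <= g k) -> rsum1 f n <= rsum1 g n.
Proof. induction n; simpl; intros H; [lra|]. pose proof (H (S n) ltac:(lia)).
  assert (rsum1 f n <= rsum1 g n) by (apply IHn; intros; apply H; lia). lra. Qed.

Lemma rsum1_nonneg f n : (forall k, 0 <= f k) -> 0 <= rsum1 f n.
Proof. intros H; induction n; simpl; [lra|]. pose proof (H (S n)); lra. Qed.

Lemma rsum1_mono f m n : (forall k, 0 <= f k) -> (m <= n)%nat -> rsum1 f m <= rsum1 f n.
Proof. intros H Hmn. induction Hmn; simpl; [lra|]. pose proof (H (S m0)); lra. Qed.

Lemma rsum1_term f n k : (forall k, 0 <= f k) -> (1 <= k <= n)%nat -> f k <= rsum1 f n.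
Proof. intros H Hk. destruct k; [lia|].
  apply Rle_trans with (rsum1 f (S k)). simpl. pose proof (rsum1_nonneg f k H); lra.
  apply rsum1_mono; auto; lia. Qed.

Lemma rsum1_abs f n : Rabs (rsum1 f n) <= rsum1 (fun i => Rabs (f i)) n.
Proof. induction n; simpl. rewrite Rabs_R0; lra.
  eapply Rle_trans; [apply Rabs_triang|]. lra. Qed.

Lemma rsum1_scal c f n : rsum1 (fun i => c * f i) n = c * rsum1 f n.
Proof. induction n; simpl; [ring|]. rewrite IHn; ring. Qed.

Lemma rsum1_sub f g n : rsum1 f n - rsum1 g n = rsum1 (fun i => f i - g i) n.
Proof. induction n; simpl; [ring|]. rewrite <- IHn; ring. Qed.

Lemma rsum1_cs f n : (rsum1 f n)^2 <= INR n * rsum1 (fun i => (f i)^2) n.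
Proof. induction n; simpl rsum1. simpl; lra.
  rewrite S_INR. set (Sm := rsum1 f n) in *. set (Q := rsum1 (fun i => f i ^ 2) n) in *.
  set (a := f (S n)). pose proof (pos_INR n).
  destruct (Nat.eq_dec n 0) as [->|Hn].
  { subst Sm Q; simpl. lra. }
  assert (0 < INR n) by (apply lt_0_INR; lia).
  assert (INR n * (Q + INR n * a^2 - 2 * Sm * a) >= 0) by (pose proof (pow2_ge_0 (Sm - INR n * a)); nra).
  assert (Q + INR n * a^2 - 2 * Sm * a >= 0).
  { destruct (Rle_or_lt 0 (Q + INR n * a^2 - 2 * Sm * a)); [lra|]. nra. }
  replace (rsum1 (fun i : nat => f i * (f i * 1)) n) with Q by reflexivity. nra.
Qed.

Lemma frob_ge d M j r : (j <= d)%nat -> (r <= d)%nat -> Rabs (M j r) <= frob d M.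
Proof.
  intros Hj Hr. unfold frob. rewrite <- sqrt_Rsqr_abs. apply sqrt_le_1_alt.
  assert (Hin : forall j, (M j r)^2 <= rsum0 (fun r0 => M j r0 ^ 2) d).
  { intros j0. unfold rsum0. destruct r.
    - pose proof (rsum1_nonneg (fun r0 => M j0 r0 ^ 2) d (fun k => pow2_ge_0 _)); lra.
    - pose proof (rsum1_term (fun r0 => M j0 r0 ^ 2) d (S r) (fun k => pow2_ge_0 _) ltac:(lia)).
      pose proof (pow2_ge_0 (M j0 0%nat)); lra. }
  assert (Hnn : forall j, 0 <= rsum0 (fun r0 => M j r0 ^ 2) d).
  { intros j0; eapply Rle_trans; [apply pow2_ge_0|apply Hin]. }
  unfold Rsqr. replace (M j r * M j r) with ((M j r)^2) by ring.
  unfold rsum0 at 1. destruct j.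
  - pose proof (rsum1_nonneg _ d Hnn). specialize (Hin 0%nat). lra.
  - pose proof (rsum1_term _ d (S j) Hnn ltac:(lia)). specialize (Hin (S j)). pose proof (Hnn 0%nat). lra.
Qed.

Lemma frob_nonneg d M : 0 <= frob d M.
Proof. apply sqrt_pos. Qed.

Lemma L1 a b : Rabs (ln (1 + exp a) - ln (1 + exp b)) <= Rabs (a - b).
Proof.
  assert (H : forall a b, b <= a -> 0 <= ln (1 + exp a) - ln (1 + exp b) <= a - b).
  { clear a b. intros a b Hab. pose proof (exp_pos a); pose proof (exp_pos b).
    split.
    - assert (ln (1 + exp b) <= ln (1 + exp a)).
      { apply ln_le; [lra|]. destruct (Req_dec a b); [subst; lra|].
        pose proof (exp_increasing b a ltac:(lra)); lra. }
      lra.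
    - assert (1 + exp a <= exp (a - b) * (1 + exp b)).
      { rewrite Rmult_plus_distr_l, Rmult_1_r, <- exp_plus. replace (a - b + b) with a by ring.
        assert (1 <= exp (a - b)).
        { destruct (Req_dec a b). subst. replace (b-b) with 0 by ring. rewrite exp_0; lra.
          left. rewrite <- exp_0. apply exp_increasing; lra. }
        lra. }
      assert (ln (1 + exp a) <= ln (exp (a - b) * (1 + exp b))) by (apply ln_le; lra).
      rewrite ln_mult, ln_exp in H2; try lra. apply exp_pos. }
  destruct (Rle_or_lt b a).
  - specialize (H a b H0). rewrite !Rabs_right; lra.
  - specialize (H b a ltac:(lra)). rewrite Rabs_left1 by lra. rewrite Rabs_left by lra. lra.
Qed.

Lemma bce1 t : bce 1 t = ln (1 + exp (- t)).
Proof. unfold bce, Defs.sigma. pose proof (exp_pos (-t)).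
  replace (1 / (1 + exp (- t))) with (/ (1 + exp (-t))) by (field; lra).
  rewrite ln_Rinv by lra. ring. Qed.

Lemma bce0 t : bce 0 t = ln (1 + exp t).
Proof. unfold bce, Defs.sigma. pose proof (exp_pos (-t)). pose proof (exp_pos t).
  replace (1 - 1 / (1 + exp (- t))) with (/ (1 + exp t)).
  rewrite ln_Rinv by lra. ring.
  rewrite exp_Ropp. field. lra. Qed.

Lemma bce_lip y a b : (y = 0 \/ y = 1) -> Rabs (bce y a - bce y b) <= Rabs (a - b).
Proof. intros [->| ->].
  - rewrite !bce0. apply L1.
  - rewrite !bce1. eapply Rle_trans; [apply L1|]. right. rewrite <- Rabs_Ropp. f_equal; ring.
Qed.

Definition Dl (x : nat -> R) (k : nat) : R := Rabs (x (pred k) - x k).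

Lemma rim_err x lam d r : (forall j : nat, (1 <= j <= d)%nat -> 0 <= lam j < 1) ->
  (r <= d)%nat -> Rabs (rim x lam r - x r) <= rsum1 (Dl x) r.
Proof.
  intros Hl. induction r; intros Hr; simpl.
  - replace (x 0%nat - x 0%nat) with 0 by ring. rewrite Rabs_R0; lra.
  - specialize (IHr ltac:(lia)). destruct (Hl (S r) ltac:(lia)) as [H0 H1].
    replace ((1 - lam (S r)) * x (S r) + lam (S r) * rim x lam r - x (S r))
      with (lam (S r) * ((rim x lam r - x r) + (x r - x (S r)))) by ring.
    rewrite Rabs_mult, (Rabs_right (lam (S r))) by lra.
    pose proof (Rabs_triang (rim x lam r - x r) (x r - x (S r))).
    assert (0 <= Rabs (rim x lam r - x r + (x r - x (S r)))) by apply Rabs_pos.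
    unfold Dl at 2; simpl pred. nra.
Qed.

Lemma AB_ge x d : rsum1 (Dl x) d <= frob d (Amat x) + rsum1 (fun i => frob d (Bmat x i)) d.
Proof.
  destruct d as [|m]. { simpl. pose proof (frob_nonneg 0 (Amat x)). lra. }
  simpl rsum1 at 1.
  assert (HA : Dl x (S m) <= frob (S m) (Amat x)).
  { unfold Dl. simpl pred. rewrite <- Amat_dd. apply frob_ge; lia. }
  assert (HB : rsum1 (Dl x) m <= rsum1 (fun i => frob (S m) (Bmat x i)) m).
  { apply rsum1_le. intros k Hk. unfold Dl. rewrite <- Bmat_ii by lia. apply frob_ge; lia. }
  assert (rsum1 (fun i => frob (S m) (Bmat x i)) m <= rsum1 (fun i => frob (S m) (Bmat x i)) (S m)).
  { apply rsum1_mono; [intros; apply frob_nonneg|lia]. }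
  lra.
Qed.

Theorem theorem3 (d : nat) (x : nat -> R) (y : R) (lam : nat -> R)
  (w : nat -> R) (b : R) (g : (nat -> R) -> R) :
  (y = 0 \/ y = 1) ->
  (forall j : nat, (1 <= j <= d)%nat -> 0 <= lam j < 1) ->
  (forall z : nat -> R, g z = dot d w z + b) ->
  Rabs (loss g (rim x lam) y - loss g x y)
  <= sqrt (INR d) * (frob d (Amat x) + rsum1 (fun i => frob d (Bmat x i)) d)
     * euclid d w.
Proof.
  intros Hy Hl Hg. unfold loss.
  eapply Rle_trans; [apply bce_lip; auto|].
  rewrite !Hg. unfold dot, rsum0.
  replace (w 0%nat * rim x lam 0 + rsum1 (fun i => w i * rim x lam i) d + b -
     (w 0%nat * x 0%nat + rsum1 (fun i => w i * x i) d + b))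
    with (rsum1 (fun i => w i * rim x lam i) d - rsum1 (fun i => w i * x i) d)
    by (simpl; ring).
  rewrite rsum1_sub.
  set (D := rsum1 (Dl x) d).
  assert (HD0 : 0 <= D) by (apply rsum1_nonneg; intros; apply Rabs_pos).
  assert (H1 : Rabs (rsum1 (fun i => w i * rim x lam i - w i * x i) d)
               <= D * rsum1 (fun i => Rabs (w i)) d).
  { eapply Rle_trans; [apply rsum1_abs|]. rewrite <- rsum1_scal. apply rsum1_le.
    intros k Hk. replace (w k * rim x lam k - w k * x k) with (w k * (rim x lam k - x k)) by ring.
    rewrite Rabs_mult. pose proof (rim_err x lam d k Hl ltac:(lia)).
    assert (rsum1 (Dl x) k <= D) by (apply rsum1_mono; [intros; apply Rabs_pos|lia]).
    pose proof (Rabs_pos (w k)). pose proof (Rabs_pos (rim x lam k - x k)). nra. }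
  assert (H2 : rsum1 (fun i => Rabs (w i)) d <= sqrt (INR d) * euclid d w).
  { unfold euclid. rewrite <- sqrt_mult_alt by apply pos_INR.
    assert (Hs : 0 <= rsum1 (fun i => Rabs (w i)) d) by (apply rsum1_nonneg; intros; apply Rabs_pos).
    rewrite <- (sqrt_pow2 _ Hs). apply sqrt_le_1_alt.
    eapply Rle_trans; [apply rsum1_cs|]. apply Rmult_le_compat_l; [apply pos_INR|].
    cbv beta. unfold rsum0. pose proof (pow2_ge_0 (w 0%nat)).
    assert (rsum1 (fun i => Rabs (w i) ^ 2) d = rsum1 (fun i => w i ^ 2) d).
    { clear. induction d; [reflexivity|]. cbn [rsum1]. rewrite IHd. f_equal. rewrite <- !Rsqr_pow2, <- Rsqr_abs. reflexivity. }
    lra. }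
  pose proof (AB_ge x d). fold D in H.
  assert (0 <= sqrt (INR d) * euclid d w) by (apply Rmult_le_pos; apply sqrt_pos).
  eapply Rle_trans; [apply H1|].
  apply Rle_trans with (D * (sqrt (INR d) * euclid d w)).
  { apply Rmult_le_compat_l; auto. }
  replace (sqrt (INR d) * (frob d (Amat x) + rsum1 (fun i => frob d (Bmat x i)) d) * euclid d w)
    with ((frob d (Amat x) + rsum1 (fun i => frob d (Bmat x i)) d) * (sqrt (INR d) * euclid d w)) by ring.
  apply Rmult_le_compat_r; auto.
Qed.
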